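(* Let $\mathcal{C}\subseteq\mathbb{R}^n$ be a nonempty closed convex set and $\theta_0\in\mathcal{C}$. Then for every $x\in\mathbb{R}^n$, $$\|\Pi_{F_{\mathcal{C}}(\theta_0)}(x)\|^2\ge\|\Pi_{K_{\mathcal{C}}}(x)\|^2.$$
   Context: $\Pi_S$ is Euclidean projection onto a closed convex set $S$. $F_{\mathcal{C}}(\theta_0)=\{\theta-\theta_0:\theta\in\mathcal{C}\}$; $T_{\mathcal{C}}(\theta)=\mathrm{cl}\{\alpha(\theta'-\theta):\alpha\ge0,\theta'\in\mathcal{C}\}$ is the tangent cone; $K_{\mathcal{C}}=\bigcap_{\theta\in\mathcal{C}}T_{\mathcal{C}}(\theta)$ is the core cone. *)

(* Defs.v *)
From HB Require Import structures.
From mathcomp Require Import all_boot all_order all_algebra.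
From mathcomp Require Import all_classical all_reals all_analysis.
Set Implicit Arguments. Unset Strict Implicit. Unset Printing Implicit Defensive.
Import Order.TTheory GRing.Theory Num.Theory numFieldNormedType.Exports.
Local Open Scope classical_set_scope.
Local Open Scope ring_scope.

Definition sqnorm (R : realType) (n : nat) (v : 'rV[R]_n) : R :=
  \sum_(i < n) v ord0 i ^+ 2.

Definition convex_set_rV (R : realType) (n : nat) (C : set 'rV[R]_n) : Prop :=
  forall x y t, C x -> C y -> 0 <= t -> t <= 1 -> C (t *: x + (1 - t) *: y).

Definition is_proj (R : realType) (n : nat) (S : set 'rV[R]_n) (x p : 'rV[R]_n) : Prop :=
  S p /\ forall q, S q -> sqnorm (x - p) <= sqnorm (x - q).

(* Pi_S(x): the (unique, for S nonempty closed convex) nearest point, chosen by choice *)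
Definition euclid_proj (R : realType) (n : nat) (S : set 'rV[R]_n) (x : 'rV[R]_n) : 'rV[R]_n :=
  xget 0 (is_proj S x).

Definition feas_dir (R : realType) (n : nat) (C : set 'rV[R]_n) (th0 : 'rV[R]_n) : set 'rV[R]_n :=
  [set th - th0 | th in C].

Definition tangent_cone (R : realType) (n : nat) (C : set 'rV[R]_n) (th : 'rV[R]_n) : set 'rV[R]_n :=
  @closure [the topologicalType of 'rV[R]_n] [set v | exists alpha : R, exists2 th', C th' & 0 <= alpha /\ v = alpha *: (th' - th)].

(* K_C = intersection of T_C(theta) over theta in C *)
Definition core_cone (R : realType) (n : nat) (C : set 'rV[R]_n) : set 'rV[R]_n :=
  \bigcap_(th in C) tangent_cone C th.

(* Main.v *)
Require Import Defs.
From HB Require Import structures.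
From mathcomp Require Import all_boot all_order all_algebra.
From mathcomp Require Import all_classical all_reals all_analysis.
From mathcomp Require Import ring lra.

Import Order.TTheory GRing.Theory Num.Theory numFieldNormedType.Exports.
Local Open Scope classical_set_scope.
Local Open Scope ring_scope.

Section H.
Variables (R : realType) (n : nat).
Implicit Types (u v w : 'rV[R]_n).

Definition dot u v : R := \sum_(i < n) u ord0 i * v ord0 i.

Lemma sqnorm_ge0 u : 0 <= sqnorm u.
Proof. by rewrite /sqnorm; apply: sumr_ge0 => i _; rewrite sqr_ge0. Qed.

Lemma sqnorm0 : sqnorm (0 : 'rV[R]_n) = 0.
Proof. by rewrite /sqnorm big1 // => i _; rewrite mxE expr0n. Qed.

Lemma sqnormDZ u v (s : R) :
  sqnorm (u + s *: v) = sqnorm u + 2 * s * dot u v + s ^+ 2 * sqnorm v.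
Proof.
rewrite /sqnorm /dot !mulr_sumr -!big_split /=; apply: eq_bigr => i _.
rewrite !mxE; ring.
Qed.

Lemma dot_p u v w : dot u w - dot v w = dot (u - v) w.
Proof.
rewrite /dot -sumrB; apply: eq_bigr => i _; rewrite !mxE; ring.
Qed.

Lemma dotZr u v (a : R) : dot u (a *: v) = a * dot u v.
Proof. rewrite /dot mulr_sumr; apply: eq_bigr => i _; rewrite !mxE; ring. Qed.

Lemma dot_sq u : dot u u = sqnorm u.
Proof. by apply: eq_bigr => i _; rewrite expr2. Qed.

Lemma sqnormB u v : sqnorm (u - v) = sqnorm u - 2 * dot u v + sqnorm v.
Proof.
rewrite /sqnorm /dot mulr_sumr -sumrB -big_split /=; apply: eq_bigr => i _.
rewrite !mxE; ring.
Qed.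

Lemma sqnormBC u v : sqnorm (u - v) = sqnorm (v - u).
Proof. by apply: eq_bigr => i _; rewrite !mxE; ring. Qed.

Lemma cont_sum (h : 'I_n -> 'rV[R]_n -> R) :
  (forall i, continuous (h i)) -> continuous (fun y => \sum_(i < n) h i y).
Proof.
move=> hc.
suff: forall s : seq 'I_n, continuous (fun y => \sum_(i <- s) h i y) by [].
elim=> [|a s IH].
  by under eq_fun do rewrite big_nil; exact: cst_continuous.
under eq_fun do rewrite big_cons.
by move=> y; apply: continuousD; [exact: hc | exact: IH].
Qed.

Lemma coord_cont (i : 'I_n) : continuous (fun y : 'rV[R]_n => y ord0 i).
Proof. exact: coord_continuous. Qed.

Lemma dot_cont u : continuous (dot u).
Proof.
apply: (@cont_sum (fun i (y : 'rV[R]_n) => u ord0 i * y ord0 i)) => i y.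
apply: continuousM; [exact: cst_continuous | exact: coord_cont].
Qed.

Lemma sqdist_cont (x : 'rV[R]_n) : continuous (fun y : 'rV[R]_n => sqnorm (x - y)).
Proof.
apply: (@cont_sum (fun i (y : 'rV[R]_n) => (x - y) ord0 i ^+ 2)) => i.
have -> : (fun y : 'rV[R]_n => (x - y) ord0 i ^+ 2) =
   (fun y => (x ord0 i - y ord0 i) * (x ord0 i - y ord0 i)).
  by apply: funext => y; rewrite !mxE expr2.
have h : continuous (fun y : 'rV[R]_n => x ord0 i - y ord0 i).
  move=> y; apply: (@continuousB _ _ _ (fun=> x ord0 i) (fun y : 'rV[R]_n => y ord0 i)).
    exact: cst_continuous.
  exact: coord_cont.
move=> y; exact: (continuousM (h y) (h y)).
Qed.

Lemma small_lim (a b : R) : 0 <= b ->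
  (forall s, 0 < s -> s < 1 -> a <= s * b) -> a <= 0.
Proof.
move=> b0 H; rewrite leNgt; apply/negP => a0.
have d0 : 0 < 2 * a + b by lra.
have := H (a / (2 * a + b)).
rewrite divr_gt0 // ltr_pdivrMr // mul1r.
have -> : (a < 2 * a + b) = true by apply/idP; lra.
move=> /(_ isT isT); rewrite mulrAC ler_pdivlMr //.
nra.
Qed.


Lemma closure_map (f : 'rV[R]_n -> 'rV[R]_n) (A B : set 'rV[R]_n) x :
  continuous f -> f @` A `<=` B -> closure A x -> closure B (f x).
Proof.
move=> fc fAB.
suff : closure A `<=` f @^-1` closure B by apply.
have /closure_id -> : closed (f @^-1` closure B).
  by apply: preimage_closed; [move=> ? _; exact: fc | exact: closed_closure].
apply: closureS => y Ay; apply: subset_closure; by apply: fAB; exists y.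
Qed.

Lemma halfspace_closed (a : 'rV[R]_n) : closed [set v | dot a v <= 0].
Proof.
rewrite (_ : [set v | dot a v <= 0] = dot a @^-1` [set z : R | z <= 0]) //.
apply: preimage_closed; [move=> y _; exact: dot_cont | exact: closed_le].
Qed.

Lemma coord_le_sq (v : 'rV[R]_n) j : `|v ord0 j| <= 1 + sqnorm v.
Proof.
have h : v ord0 j ^+ 2 <= sqnorm v.
  rewrite /sqnorm (bigD1 j) //= lerDl; apply: sumr_ge0 => k _; exact: sqr_ge0.
rewrite -real_normK ?num_real // in h.
have := normr_ge0 (v ord0 j); nra.
Qed.

Lemma proj_exists (F : set 'rV[R]_n) (x : 'rV[R]_n) :
  closed F -> F !=set0 -> exists p, is_proj F x p.
Proof.
move=> Fcl [f0 Ff0].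
set r := sqnorm (x - f0).
set A := F `&` [set y | sqnorm (x - y) <= r].
have Acl : closed A.
  apply: closedI => //.
  rewrite (_ : [set y | sqnorm (x - y) <= r] = (fun y => sqnorm (x - y)) @^-1` [set z : R | z <= r]) //.
  apply: preimage_closed; [move=> y _; exact: sqdist_cont | exact: closed_le].
have Abd : bounded_set A.
  change (\forall M \near +oo, globally A [set y : 'rV[R]_n | `|y| <= M]).
  near=> M => y [Fy Hy] /=.
  apply: (@le_trans _ _ (`|x| + (1 + r))); last first.
    near: M; apply: nbhs_pinfty_ge; exact: num_real.
  have -> : y = x + (y - x) by rewrite addrC subrK.
  apply: (le_trans (ler_normD _ _)); rewrite lerD2l.
  rewrite -[`|y - x|]/(mx_norm (y - x)) mx_normrE; apply: bigmax_le.
    by apply: addr_ge0 => //; apply: sqnorm_ge0.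
  move=> [i j] _ /=; rewrite (ord1 i).
  apply: (le_trans (coord_le_sq _ j)); rewrite lerD2l.
  by rewrite sqnormBC.
have Acp := bounded_closed_compact Abd Acl.
have A0 : A !=set0 by exists f0; split => //=; rewrite /r.
have Ac : {within A, continuous (fun y => sqnorm (x - y))}.
  by apply: continuous_subspaceT => y; exact: sqdist_cont.
have [c cA cmin] := EVT_min_rV A0 Acp Ac.
move: cA; rewrite inE => -[Fc Hc]; exists c; split => // q Fq.
have [Hq|Hq] := leP (sqnorm (x - q)) r.
  by apply: cmin; rewrite inE.
by apply: (le_trans Hc); apply: ltW.
Unshelve. all: by end_near.
Qed.

End H.
Arguments dot {R n}.
Arguments sqnorm_ge0 {R n}.
Arguments sqnorm0 {R n}.
Arguments sqnormDZ {R n}.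
Arguments dot_p {R n}.
Arguments dotZr {R n}.
Arguments dot_sq {R n}.
Arguments sqnormB {R n}.
Arguments sqnormBC {R n}.
Arguments cont_sum {R n}.
Arguments coord_cont {R n}.
Arguments dot_cont {R n}.
Arguments sqdist_cont {R n}.
Arguments small_lim {R}.
Arguments closure_map {R n}.
Arguments halfspace_closed {R n}.
Arguments coord_le_sq {R n}.
Arguments proj_exists {R n}.

Theorem lemma11 (R : realType) (n : nat) (C : set 'rV[R]_n) (th0 : 'rV[R]_n) :
  C !=set0 -> closed C -> convex_set_rV C -> C th0 ->
  forall x : 'rV[R]_n,
    sqnorm (euclid_proj (core_cone C) x) <= sqnorm (euclid_proj (feas_dir C th0) x).
Proof.
move=> _ clC cvxC Cth0 x.
set F := feas_dir C th0.
set K := core_cone C.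
have FE : F = (fun y => y + th0) @^-1` C.
  apply/seteqP; split => y /=.
  - by case=> th Cth <-; rewrite subrK.
  - by move=> Cy; exists (y + th0) => //; rewrite addrK.
have Fcl : closed F.
  rewrite FE; apply: preimage_closed => // y _.
  apply: (@continuousD _ _ _ (fun y : 'rV[R]_n => y) (fun=> th0)).
    by move=> ?; exact.
  exact: cst_continuous.
have F0 : F 0 by exists th0 => //; rewrite subrr.
have [p0 Hp0] := proj_exists F x Fcl (ex_intro _ 0 F0).
have : is_proj F x (euclid_proj F x) by apply: xgetPex; exists p0.
set p := euclid_proj F x => -[Fp pmin].
have var : forall f, F f -> dot (x - p) (f - p) <= 0.
  move=> f Ff.
  suff : 2 * dot (x - p) (f - p) <= 0 by lra.
  apply: (small_lim _ _ (sqnorm_ge0 (f - p))) => s s0 s1.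
  have Fs : F (p + s *: (f - p)).
    case: Ff => th1 C1 <-; case: Fp => th2 C2 <-.
    exists (s *: th1 + (1 - s) *: th2); first by apply: cvxC => //; lra.
    by apply/rowP => i; rewrite !mxE; ring.
  have := pmin _ Fs.
  rewrite (_ : x - (p + s *: (f - p)) = (x - p) + (- s) *: (f - p)); last first.
    by apply/rowP => i; rewrite !mxE; ring.
  rewrite sqnormDZ.
  have := sqnorm_ge0 (f - p); nra.
case: (pselect (exists q, is_proj K x q)) => [Kex|Knex]; last first.
  rewrite /euclid_proj (xgetPN 0 (P := is_proj K x)); last first.
    by move=> q Pq; apply: Knex; exists q.
  by rewrite sqnorm0; apply: sqnorm_ge0.
have : is_proj K x (euclid_proj K x) by apply: xgetPex.
set q := euclid_proj K x => -[Kq qmin].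
have Kscale : forall t, 0 < t -> K (t *: q).
  move=> t t0 th Cth.
  have := Kq th Cth; rewrite /tangent_cone => cq.
  apply: (@closure_map _ _ (fun v => t *: v) _ _ _ _ _ cq).
    exact: scaler_continuous.
  move=> _ [v [alpha [th' Cth' [a0 ->]]] <-].
  exists (t * alpha); exists th' => //; split; first by apply: mulr_ge0 => //; apply: ltW.
  by rewrite scalerA.
have qineq : sqnorm q <= dot x q.
  suff : - 2 * dot (x - q) q <= 0.
    by rewrite -dot_p dot_sq; lra.
  apply: (small_lim _ _ (sqnorm_ge0 q)) => s s0 s1.
  have := qmin _ (Kscale (1 - s) ltac:(lra)).
  rewrite (_ : x - (1 - s) *: q = (x - q) + s *: q); last first.
    by apply/rowP => i; rewrite !mxE; ring.
  rewrite sqnormDZ.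
  have := sqnorm_ge0 q; nra.
have pineq : dot (x - p) q <= 0.
  case: Fp => th Cth pE.
  have := Kq th Cth; rewrite /tangent_cone.
  suff : closure [set v | exists alpha : R, exists2 th', C th' & 0 <= alpha /\ v = alpha *: (th' - th)]
     `<=` [set v | dot (x - p) v <= 0] by apply.
  rewrite (proj1 (closure_id _) (halfspace_closed (x - p))).
  apply: closureS => _ [alpha [th' Cth' [a0 ->]]] /=.
  rewrite dotZr; apply: mulr_ge0_le0 => //.
  have := var (th' - th0) (ex_intro2 _ _ th' Cth' erefl).
  by rewrite (_ : th' - th0 - p = th' - th) // -pE; apply/rowP => i; rewrite !mxE; ring.
have := sqnorm_ge0 (p - q); rewrite sqnormB.
have := dot_p x p q; rewrite -/(dot x q).
have : dot p q = dot q p by apply: eq_bigr => i _; rewrite mulrC.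
lra.
Qed.
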